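(* Assume (a), (b) (for every dataset $z$), (d) and (e) for the algorithm $P^{(Q,\lambda)}_{\Theta|Z}$. Then $$\bar{\bar G}\big(P^{(Q,\lambda)}_{\Theta|Z},P_Z\big)=\lambda\int\Big(\int\dot f\Big(\frac{dP^{(Q,\lambda)}_{\Theta|Z=z}}{dQ}(\theta)\Big)dP^{(Q,\lambda)}_{\Theta|Z=z}(\theta)-\int\dot f\Big(\frac{dP^{(Q,\lambda)}_{\Theta|Z=z}}{dQ}(\theta)\Big)dP^{(Q,\lambda)}_{\Theta}(\theta)\Big)dP_Z(z).$$
   Context: Setting. - $\mathcal{M}\subseteq\mathbb{R}^d$; $h:\mathcal{M}\times\mathcal{X}\to\mathcal{Y}$; the loss $\ell:\mathcal{Y}\times\mathcal{Y}\to[0,\infty)$ satisfies $\ell(y,y)=0$. - For a dataset $z\in(\mathcal{X}\times\mathcal{Y})^n$, $L_z(\theta)=\frac1n\sum_i\ell(h(\theta,x_i),y_i)$ and $R_z(P)=\int L_z\,dP$. - $Q$ is a Borel probability measure on $\mathcal{M}$, and $\triangle_Q(\mathcal{M})$ is the set of probability measures $P\ll Q$. Fix $\lambda>0$. - $f:[0,\infty)\to\mathbb{R}$ is convex with $f(1)=0$; $D_f(P\|Q)=\int f(\frac{dP}{dQ})dQ$. - $\dot f$ is the derivative of $f$ on $(0,\infty)$ and $\dot f^{-1}$ its inverse. Assumptions. - (a) $f$ is strictly convex and differentiable. - (b) For the given $z$, there exists $\beta$ with $\dot f^{-1}\big(-\frac{\beta+L_z(\theta)}{\lambda}\big)>0$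 on $\operatorname{supp}Q$ and $\int\dot f^{-1}\big(-\frac{\beta+L_z(\theta)}{\lambda}\big)dQ=1$. The algorithm. - $P^{(Q,\lambda)}_{\Theta|Z=z}$ is the unique minimizer of $R_z(P)+\lambda D_f(P\|Q)$ over $\triangle_Q(\mathcal{M})$, with density $\frac{dP^{(Q,\lambda)}_{\Theta|Z=z}}{dQ}(\theta)=\dot f^{-1}\big(-\frac{\beta+L_z(\theta)}{\lambda}\big)$. - $P_Z$ is a probability measure on $(\mathcal{X}\times\mathcal{Y})^n$. - $P^{(Q,\lambda)}_{\Theta|Z}$ is the algorithm $z\mapsto P^{(Q,\lambda)}_{\Theta|Z=z}$. - $P^{(Q,\lambda)}_\Theta(\mathcal{C})=\int P^{(Q,\lambda)}_{\Theta|Z=z}(\mathcal{C})\,dP_Z(z)$. Generalization error. For an algorithm $P_{\Theta|Z}$ with marginal $P_\Theta(\mathcal{C})=\int P_{\Theta|Z=z}(\mathcal{C})dP_Z(z)$, $$\bar{\bar G}(P_{\Theta|Z},P_Z)=\int\!\int\big(R_u(P_{\Theta|Z=z})-R_z(P_{\Theta|Z=z})\big)dP_Z(u)\,dP_Z(z).$$ Further assumptions. - (d) For all $z$, $P_{\Theta|Z=z}\ll P_\Theta$ and $P_\Theta\in\triangle_Q(\mathcal{M})$. - (e) $P_\Theta$ and $Q$ are mutually absolutely continuous. *)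

(* Defs.v *)
From HB Require Import structures.
From mathcomp Require Import all_boot all_order all_algebra.
From mathcomp Require Import all_classical all_reals all_analysis.
Set Implicit Arguments. Unset Strict Implicit. Unset Printing Implicit Defensive.
Import Order.TTheory GRing.Theory Num.Theory.
Import numFieldNormedType.Exports.
Local Open Scope classical_set_scope.
Local Open Scope ring_scope.

Definition strictly_convex_on {R : realType} (f : R -> R) (I : set R) : Prop :=
  forall x y t, I x -> I y -> x != y -> 0 < t -> t < 1 ->
    f (t * x + (1 - t) * y) < t * f x + (1 - t) * f y.

Definition fdot {R : realType} (f : R -> R) : R -> R := fun x => derive1 f x.

(* fdot^{-1}: the (unique, by strict convexity) x in (0,oo) with fdot f x = y;
   default value 0 when no such x exists. *)
Definition fdot_inv {R : realType} (f : R -> R) (y : R) : R :=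
  xget 0 [set x | 0 < x /\ fdot f x = y].

Definition emp_risk {R : realType} {X Y Th : Type} {n : nat}
  (h : Th -> X -> Y) (ell : Y -> Y -> R) (z : n.-tuple (X * Y)) (th : Th) : R :=
  n%:R^-1 * \sum_(i < n) ell (h th (tnth z i).1) (tnth z i).2.

Definition risk {R : realType} {d} {Th : measurableType d} {Z : Type}
  (L : Z -> Th -> R) (z : Z) (P : set Th -> \bar R) : \bar R :=
  (\int[P]_th (L z th)%:E)%E.

(* density of the algorithm: dP_{Theta|Z=z}/dQ (theta) = fdot^{-1}(-(beta z + L_z theta)/lambda) *)
Definition gibbs_density {R : realType} {Th Z : Type} (f : R -> R)
  (lam : R) (beta : Z -> R) (L : Z -> Th -> R) (z : Z) (th : Th) : R :=
  fdot_inv f (- (beta z + L z th) / lam).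

Definition gen_error {R : realType} {d dz} {Th : measurableType d}
  {Z : measurableType dz} (L : Z -> Th -> R)
  (P : Z -> set Th -> \bar R) (PZ : set Z -> \bar R) : \bar R :=
  (\int[PZ]_z \int[PZ]_u (risk L u (P z) - risk L z (P z)))%E.

(* Main.v *)
Require Import Defs.
From HB Require Import structures.
From mathcomp Require Import all_boot all_order all_algebra.
From mathcomp Require Import all_classical all_reals all_analysis.
From mathcomp Require Import ring lra measurable_realfun.
Import Order.TTheory GRing.Theory Num.Theory.
Import numFieldNormedType.Exports.
Local Open Scope classical_set_scope.
Local Open Scope ring_scope.


Section Ana.
Context {R : realType} (f : R -> R).
Hypothesis hder : forall x : R, 0 < x -> derivable f x 1.

Lemma slope_right (x t : R) (conv : forall s, 0 < s < 1 -> f (s * t + (1 - s) * x) <= s * f t + (1 - s) * f x) :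
  0 < x -> x < t -> 'D_1 f x <= (f t - f x) / (t - x).
Proof.
move=> x0 xt.
have dfx := @hder x x0.
rewrite ['D_1 f x]cvg_at_rightE; last exact: dfx.
apply: limr_le.
  rewrite -(cvg_at_rightE (fun h : R => h^-1 *: ((f \o shift x) _ - f x))) //.
  apply: cvg_trans dfx; apply: cvg_app.
  move=> A [e egt0 Ae]; exists e => // y ye ygt0; apply: Ae => //.
  exact/lt0r_neq0.
near=> s.
have s0 : 0 < s by near: s; exists 1 => /=.
have st : s < t - x.
  near: s; exists (t - x); first by rewrite /= subr_gt0.
  by move=> s; rewrite /= distrC subr0 => /(le_lt_trans (ler_norm _)).
rewrite /= [_%:A]mulr1.
pose th := s / (t - x).
have txp : 0 < t - x by rewrite subr_gt0.
have th01 : 0 < th < 1.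
  by rewrite /th divr_gt0 //= ltr_pdivrMr // mul1r.
have := conv _ th01.
have -> : th * t + (1 - th) * x = s + x.
  by rewrite /th; field; rewrite gt_eqF.
move=> H.
have E : th * f t + (1 - th) * f x - f x = s * ((f t - f x) / (t - x)).
  by rewrite /th; field; rewrite gt_eqF.
have K : f (s + x) - f x <= s * ((f t - f x) / (t - x)) by rewrite -E; lra.
have -> : s^-1 *: (f (s + x) - f x) = (f (s + x) - f x) / s.
  by rewrite /GRing.scale /= mulrC.
by rewrite ler_pdivrMr // mulrC.
Unshelve. all: by end_near. Qed.

Lemma slope_left (x t : R) (conv : forall s, 0 < s < 1 -> f (s * t + (1 - s) * x) <= s * f t + (1 - s) * f x) :
  0 < x -> t < x -> (f x - f t) / (x - t) <= 'D_1 f x.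
Proof.
move=> x0 xt.
have dfx := @hder x x0.
rewrite ['D_1 f x]cvg_at_leftE; last exact: dfx.
apply: limr_ge.
  rewrite -(cvg_at_leftE (fun h : R => h^-1 *: ((f \o shift x) _ - f x))) //.
  apply: cvg_trans dfx; apply: cvg_app.
  move=> A [e egt0 Ae]; exists e => // y ye ygt0; apply: Ae => //.
  exact/ltr0_neq0.
near=> s.
have s0 : s < 0 by near: s; exists 1 => /=.
have st : t - x < s.
  near: s; exists (x - t); first by rewrite /= subr_gt0.
  move=> s; rewrite /= distrC subr0 => /ltr_normlP [] + _.
  by rewrite ltrNl opprB.
rewrite /= [_%:A]mulr1.
pose th := - s / (x - t).
have txp : 0 < x - t by rewrite subr_gt0.
have th01 : 0 < th < 1.
  rewrite /th divr_gt0 ?oppr_gt0 //= ltr_pdivrMr // mul1r; lra.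
have := conv _ th01.
have -> : th * t + (1 - th) * x = s + x.
  by rewrite /th; field; rewrite gt_eqF.
move=> H.
have E : th * f t + (1 - th) * f x - f x = s * ((f x - f t) / (x - t)).
  by rewrite /th; field; rewrite gt_eqF.
have K : f (s + x) - f x <= s * ((f x - f t) / (x - t)) by rewrite -E; lra.
have -> : s^-1 *: (f (s + x) - f x) = (f (s + x) - f x) / s.
  by rewrite /GRing.scale /= mulrC.
by rewrite ler_ndivlMr // mulrC.
Unshelve. all: by end_near. Qed.
End Ana.

Section Ana2.
Context {R : realType} (f : R -> R).
Hypothesis hder : forall x : R, 0 < x -> derivable f x 1.
Hypothesis hconv : strictly_convex_on f `[0, +oo[.

Lemma conv_le (a b s : R) : 0 <= a -> 0 <= b -> 0 < s < 1 ->
  f (s * a + (1 - s) * b) <= s * f a + (1 - s) * f b.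
Proof.
move=> a0 b0 s01; have [->|ab] := eqVneq a b.
  by rewrite -mulrDl -mulrDl subrKC !mul1r.
apply/ltW/hconv => //=; rewrite ?in_itv /= ?andbT //; by case/andP: s01.
Qed.

Lemma tangent (x t : R) : 0 < x -> 0 <= t ->
  f x - fdot f x * x <= f t - fdot f x * t.
Proof.
move=> x0 t0; rewrite /fdot derive1E.
have [xt|tx|<-] := ltgtP x t; last by [].
- have := @slope_right R f hder x t _ x0 xt.
  rewrite ler_pdivlMr ?subr_gt0 // => /(_ _)/wrap[].
    by move=> s s01; apply: conv_le => //; exact: ltW.
  move=> H; nra.
- have := @slope_left R f hder x t _ x0 tx.
  rewrite ler_pdivrMr ?subr_gt0 // => /(_ _)/wrap[].
    by move=> s s01; apply: conv_le => //; exact: ltW.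
  move=> H; nra.
Qed.

Lemma min_deriv (x y : R) : 0 < x ->
  (forall t, 0 <= t -> f x - y * x <= f t - y * t) -> fdot f x = y.
Proof.
move=> x0 xmin.
pose k := f - y \*: (@id R).
have dk t : 0 < t -> derivable k t 1.
  by move=> t0; apply: derivableB; [exact: hder| apply: derivableZ; exact: derivable_id].
have x2 : x \in `]0, 2 * x[ by rewrite in_itv /=; apply/andP; split => //; lra.
have := @derive1_at_min R k 0 (2 * x) x _ _ x2 _.
move=> /(_ _ _ _)/wrap[]; first lra.
  by move=> t; rewrite in_itv /= => /andP[t0 _]; exact: dk.
  move=> t; rewrite in_itv /= => /andP[t0 _]; rewrite /k /=.
  rewrite /GRing.scale /=; exact: xmin (ltW t0).
move=> H.
have H2 : is_derive x 1 k ('D_1 f x - y *: 1).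
  apply: is_deriveB; first exact/derivableP/hder.
have E1 := @derive_val _ _ _ _ _ _ _ H.
have E2 := @derive_val _ _ _ _ _ _ _ H2.
move: E2; rewrite E1 /fdot derive1E /GRing.scale /= mulr1 => /eqP.
by rewrite eq_sym subr_eq0 => /eqP.
Qed.

Lemma unique_min (x1 x2 y : R) : 0 <= x1 -> 0 <= x2 ->
  (forall t, 0 <= t -> f x1 - y * x1 <= f t - y * t) ->
  (forall t, 0 <= t -> f x2 - y * x2 <= f t - y * t) -> x1 = x2.
Proof.
move=> x10 x20 m1 m2; apply/eqP/negPn/negP => x12.
have h1 : 0 < 2^-1 :> R by lra.
have h2 : 2^-1 < 1 :> R by lra.
have := hconv x1 x2 (2^-1).
rewrite /= !in_itv /= !andbT => /(_ x10 x20 x12 h1 h2) H.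
have := m1 (2^-1 * x1 + (1 - 2^-1) * x2) ltac:(lra).
have := m2 (2^-1 * x1 + (1 - 2^-1) * x2) ltac:(lra).
lra.
Qed.

Lemma phi_ge0 y : 0 <= fdot_inv f y.
Proof.
rewrite /fdot_inv.
have [[x Px]|N] := pselect (exists x, [set x | 0 < x /\ fdot f x = y] x).
  by have [/ltW] := xgetPex 0 (ex_intro _ x Px).
by rewrite xgetPN // => x Px; apply: N; exists x.
Qed.

Lemma phi_pos y : 0 < fdot_inv f y -> fdot f (fdot_inv f y) = y.
Proof.
rewrite /fdot_inv.
have [[x Px]|N] := pselect (exists x, [set x | 0 < x /\ fdot f x = y] x).
  by have [_ ->] := xgetPex 0 (ex_intro _ x Px).
by rewrite xgetPN ?ltxx // => x Px; apply: N; exists x.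
Qed.

Lemma phi_min y : 0 < fdot_inv f y ->
  forall t, 0 <= t -> f (fdot_inv f y) - y * fdot_inv f y <= f t - y * t.
Proof.
move=> h t t0; have E := @phi_pos y h.
have := tangent (fdot_inv f y) t h t0; by rewrite E.
Qed.

Lemma phi_eq x y : 0 < x -> (forall t, 0 <= t -> f x - y * x <= f t - y * t) ->
  fdot_inv f y = x.
Proof.
move=> x0 xm; have dx := @min_deriv x y x0 xm.
rewrite /fdot_inv; apply: (xget_unique 0 (conj x0 dx)) => z [z0 dz].
apply: (@unique_min z x y) => //; [exact: ltW| exact: ltW|].
by move=> t t0; have := tangent z t z0 t0; rewrite dz.
Qed.

Lemma phi_itv (c : R) : 0 <= c -> is_interval [set y | c < fdot_inv f y].
Proof.
move=> c0 y1 y2 /= H1 H2 y /andP[y1y yy2].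
have [->//|ny1] := eqVneq y y1.
have [->//|ny2] := eqVneq y y2.
have ly1 : y1 < y by rewrite lt_neqAle eq_sym ny1.
have ly2 : y < y2 by rewrite lt_neqAle ny2.
set x1 := fdot_inv f y1 in H1 *; set x2 := fdot_inv f y2 in H2 *.
have p1 : 0 < x1 by exact: le_lt_trans H1.
have p2 : 0 < x2 by exact: le_lt_trans H2.
have m1 := @phi_min y1 p1; have m2 := @phi_min y2 p2.
rewrite -/x1 in m1; rewrite -/x2 in m2.
have x12 : x1 <= x2.
  have a1 := m1 x2 (ltW p2); have a2 := m2 x1 (ltW p1).
  rewrite leNgt; apply/negP => h.
  have : 0 < (y2 - y1) * (x1 - x2) by apply: mulr_gt0; lra.
  lra.
pose k := f - y \*: (@id R).
have kE t : k t = f t - y * t by [].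
have ck : {within `[x1, x2], continuous k}.
  apply: derivable_within_continuous => t; rewrite in_itv /= => /andP[t1 _].
  apply: derivableB; [apply: hder; exact: lt_le_trans t1| apply: derivableZ; exact: derivable_id].
have [c1 c1i c1m] := EVT_min x12 ck.
move: c1i; rewrite in_itv /= => /andP[c1a c1b].
rewrite /= (@phi_eq c1 y); first exact: lt_le_trans c1a.
  exact: lt_le_trans c1a.
move=> t t0; rewrite -!kE.
have k1 := c1m x1; have k2 := c1m x2.
rewrite !in_itv /= !lexx x12 /= in k1 k2.
have [tx1|x1t] := ltP t x1.
  have := m1 t t0; rewrite -/x1 => h.
  have : 0 <= (y - y1) * (x1 - t) by apply: mulr_ge0; lra.
  move: (k1 isT); rewrite !kE; nra.
have [x2t|tx2] := ltP x2 t.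
  have := m2 t t0; rewrite -/x2 => h.
  have : 0 <= (y2 - y) * (t - x2) by apply: mulr_ge0; lra.
  move: (k2 isT); rewrite !kE; nra.
by apply: c1m; rewrite in_itv /= x1t tx2.
Qed.

Lemma phi_measurable : measurable_fun setT (fdot_inv f).
Proof.
apply: (measurability (@measurable_realfun.RGenOInfty.G R)) => [|/= _ [_] [c] -> <-].
  exact: measurable_realfun.RGenOInfty.measurableE.
apply: measurableI => //.
have [c0|c0] := ltP c 0.
  rewrite (_ : _ @^-1` _ = setT) //; apply/seteqP; split => // y _ /=.
  by rewrite in_itv /= andbT; exact: lt_le_trans (phi_ge0 y).
apply: measurable_realfun.is_interval_measurable => y1 y2 /=; rewrite !in_itv /= !andbT => h1 h2 z hz.
by rewrite in_itv /= andbT; exact: (@phi_itv c c0 y1 y2 h1 h2 z hz).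
Qed.
End Ana2.

Section mixture.
Local Open Scope ereal_scope.
Context d dz (T : measurableType d) (Z : measurableType dz) (R : realType).
Variables (PZ : probability Z R) (P : Z -> probability T R) (PT : probability T R).
Hypothesis hPm : forall A, measurable A -> measurable_fun [set: Z] (fun z => P z A : \bar R).
Hypothesis PT_def : forall A, measurable A -> PT A = \int[PZ]_z P z A.

Import HBNNSimple.

Lemma mix_measurable (h : T -> \bar R) :
  measurable_fun [set: T] h -> (forall x, 0 <= h x) ->
  measurable_fun [set: Z] (fun z => \int[P z]_x h x).
Proof.
move=> mf h0.
pose g := nnsfun_approx measurableT mf.
pose Eg := fun n => EFin \o g n.
pose intEg := fun n z => \int[P z]_x (Eg n x).
have mintgE n : measurable_fun [set: Z] (intEg n).
  rewrite /intEg /=.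
  under eq_fun do rewrite integralT_nnsfun sintegralE.
  apply: emeasurable_fsum => //= r.
  by apply: measurable_funeM => //=; exact: hPm.
apply: (emeasurable_fun_cvg _ _ mintgE) => z _.
rewrite (_ : \int[P z]_x h x = \int[P z]_x limn (Eg ^~ x)).
  apply: cvg_monotone_convergence => //.
  - by move=> n; exact/measurable_EFinP.
  - by move=> n x _; rewrite lee_fin.
  - by move=> t _ n m nm; apply/lefP/nd_nnsfun_approx.
apply: eq_integral => t _.
by apply/esym/cvg_lim  => //; exact/cvg_nnsfun_approx.
Qed.

Lemma mix_sintegral (h : {nnsfun T >-> R}) :
  sintegral PT h = \int[PZ]_z sintegral (P z) h.
Proof.
under eq_integral do rewrite sintegralE.
rewrite ge0_integral_fsum//; last 2 first.
  by move=> r; apply: measurable_funeM; exact: hPm.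
  by move=> n x _; exact: nnsfun_mulemu_ge0.
rewrite sintegralE /=; apply: eq_fsbigr => // r rh.
rewrite integralZl//; first by rewrite PT_def.
have := finite_measure_integrable_cst PZ 1 measurableT.
apply: le_integrable => //; first exact: hPm.
move=> z _ /=.
rewrite normr1 (le_trans _ (probability_le1 (P z) measurableT))// gee0_abs//.
by rewrite le_measure// ?inE.
Qed.

Lemma mix_integral (h : T -> \bar R) :
    measurable_fun [set: T] h -> (forall x, 0 <= h x) ->
  \int[PT]_x h x = \int[PZ]_z \int[P z]_x h x.
Proof.
move=> mh h0.
pose g := nnsfun_approx measurableT mh.
pose gE := fun n => EFin \o g n.
have mgE n : measurable_fun [set: T] (gE n) by exact/measurable_EFinP.
have gE_ge0 n x : 0 <= gE n x by rewrite lee_fin.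
have nd_gE x : {homo gE ^~ x : n m / (n <= m)%O >-> n <= m}.
  by move=> *; exact/lefP/nd_nnsfun_approx.
transitivity (limn (fun n => \int[PT]_x gE n x)).
  rewrite -monotone_convergence//; apply: eq_integral => t _.
  by apply/esym/cvg_lim => //; exact: cvg_nnsfun_approx.
transitivity (limn (fun n => \int[PZ]_z \int[P z]_x gE n x)).
  apply: congr_lim; apply/funext => n.
  rewrite integralT_nnsfun mix_sintegral; apply: eq_integral => x _.
  by rewrite integralT_nnsfun.
rewrite -[LHS]monotone_convergence//; last 3 first.
  by move=> n; exact: mix_measurable.
  by move=> n x _; exact: integral_ge0.
  by move=> x _ m n mn; apply: ge0_le_integral => // t _; exact: nd_gE.
apply: eq_integral => z _.
rewrite -monotone_convergence//.
apply: eq_integral => t _.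
by apply/cvg_lim => //; exact: cvg_nnsfun_approx.
Qed.
End mixture.

Lemma emp_risk_measurable (R : realType) (dM : measure_display) (M : measurableType dM)
  (dX dY : measure_display) (X : measurableType dX) (Y : measurableType dY)
  (n : nat) (h : M -> X -> Y) (ell : Y -> Y -> R)
  (mh : measurable_fun [set: M * X] (fun p => h p.1 p.2))
  (mell : measurable_fun [set: Y * Y] (fun p => ell p.1 p.2)) :
  measurable_fun [set: n.-tuple (X * Y) * M] (fun p => emp_risk h ell p.1 p.2).
Proof.
rewrite /emp_risk.
apply: measurable_funM => //.
apply: measurable_sum => i.
have mt : measurable_fun [set: n.-tuple (X * Y) * M] (fun p => tnth p.1 i).
  exact: measurableT_comp (measurable_tnth i) measurable_fst.
apply: (measurableT_comp (f := fun p : Y * Y => ell p.1 p.2) (g := fun p : n.-tuple (X * Y) * M => (h p.2 (tnth p.1 i).1, (tnth p.1 i).2))) => //.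
apply: measurable_fun_pair.
  apply: (measurableT_comp (f := fun p : M * X => h p.1 p.2) (g := fun p : n.-tuple (X * Y) * M => (p.2, (tnth p.1 i).1))) => //.
  apply: measurable_fun_pair => //.
  exact: measurableT_comp measurable_fst mt.
exact: measurableT_comp measurable_snd mt.
Qed.

Lemma int_cst_prob d (T : measurableType d) (R : realType) (mu : probability T R)
  (r : \bar R) : (\int[mu]_x r = r)%E.
Proof.
have := @integral_cst _ _ _ mu setT measurableT r.
move=> H; apply: eq_trans H _; rewrite -[RHS]mule1; congr (_ * _)%E.
exact: probability_setT.
Qed.

Lemma cst_minus d (T : measurableType d) (R : realType) (mu : probability T R)
  (c : R) (F : T -> R) : measurable_fun setT F -> (forall x, 0 <= F x) ->
  (\int[mu]_x (c - F x)%:E = c%:E - \int[mu]_x (F x)%:E)%E.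
Proof.
move=> mF F0.
have mEF : measurable_fun setT (EFin \o F) by exact/measurable_EFinP.
have icst : mu.-integrable setT (EFin \o cst c) by exact: finite_measure_integrable_cst.
have [iF|iF] := ltP (\int[mu]_x (F x)%:E)%E +oo%E.
  have iF' : mu.-integrable setT (EFin \o F).
    apply/integrableP; split => //.
    by under eq_integral do rewrite /= ger0_norm ?F0//.
  have := @integralB_EFin _ _ _ mu setT (cst c) F measurableT icst iF'.
  move=> ->; congr (_ - _)%E.
  have := @integral_cst _ _ _ mu setT measurableT c%:E.
  move=> H; apply: (eq_trans H); rewrite -[RHS]mule1; congr (_ * _)%E; exact: probability_setT.
have -> : (\int[mu]_x (F x)%:E = +oo)%E by apply/eqP; rewrite eq_le leey.
rewrite addeNy integralE.
set hp := (\int[mu]_x _)%E.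
have hpfin : (hp < +oo)%E.
  apply: (@le_lt_trans _ _ (`|c|%:E)); last exact: ltey.
  rewrite -[X in (_ <= X)%E]mule1 -(probability_setT mu) -integral_cst //.
  apply: ge0_le_integral => //.
  - by apply: measurable_funepos; apply/measurable_EFinP; exact: measurable_funB.
  - move=> x _; rewrite funeposE /= ge_max !lee_fin normr_ge0 andbT.
    by apply: le_trans (ler_norm c); rewrite lerBlDr lerDl F0.
have hn : (\int[mu]_x (fun y => (c - F y)%:E)^\- x = +oo)%E.
  apply/eqP; rewrite eq_le leey /=.
  have : (\int[mu]_x (F x)%:E <= \int[mu]_x ((fun y => (c - F y)%:E)^\- x + `|c|%:E))%E.
    have mneg : measurable_fun setT (funeneg (fun y => (c - F y)%:E)).
      by apply: measurable_funeneg; apply/measurable_EFinP; exact: measurable_funB.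
    apply: ge0_le_integral => //.
    - by move=> x _; rewrite lee_fin.
    - exact: (emeasurable_funD mneg (measurable_cst (`|c|%:E)%E)).
    - move=> x _; rewrite funenegE /=.
      have H : (- (c - F x)%:E <= maxe (- (c - F x)%:E) 0)%E by rewrite le_max lexx.
      apply: le_trans (leeD H (lexx _)) => /=.
      by rewrite -EFinD lee_fin opprB -addrA lerDl addrC subr_ge0 ler_norm.
  rewrite ge0_integralD //; last first.
    by apply: measurable_funeneg; apply/measurable_EFinP; exact: measurable_funB.
  rewrite int_cst_prob.
  have -> : (\int[mu]_x (F x)%:E = +oo)%E by apply/eqP; rewrite eq_le leey.
  by case: (\int[mu]_x _)%E => [r||] //=; rewrite leye_eq.
rewrite hn; clearbody hp; move: hpfin; by case: hp.
Qed.

Section main.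
Variables (R : realType) (dM : measure_display) (M : measurableType dM)
  (dX dY : measure_display) (X : measurableType dX) (Y : measurableType dY)
  (n : nat) (h : M -> X -> Y) (ell : Y -> Y -> R).
Hypothesis ell_ge0 : forall y y', 0 <= ell y y'.
Hypothesis mh : measurable_fun [set: M * X] (fun p => h p.1 p.2).
Hypothesis mell : measurable_fun [set: Y * Y] (fun p => ell p.1 p.2).
Variables (Q : probability M R) (lam : R).
Hypothesis lam_gt0 : 0 < lam.
Variable (f : R -> R).
Hypothesis f_sconv : strictly_convex_on f `[0, +oo[.
Hypothesis f_der : forall x, 0 < x -> derivable f x 1.
Variables (PZ : probability (n.-tuple (X * Y)) R) (beta : n.-tuple (X * Y) -> R).
Hypothesis mbeta : measurable_fun [set: n.-tuple (X * Y)] beta.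
Local Notation Z := (n.-tuple (X * Y)).
Local Notation L := (@emp_risk _ _ _ _ n h ell).
Local Notation g := (gibbs_density f lam beta L).
Hypothesis b_pos : forall z, {ae Q, forall th, 0 < g z th}.
Variable P : Z -> probability M R.
Hypothesis P_dens : forall z A, measurable A ->
      P z A = (\int[Q]_(th in A) (g z th)%:E)%E.
Variable PT : probability M R.
Hypothesis PT_def : forall A, measurable A -> PT A = (\int[PZ]_z P z A)%E.
Hypothesis hd1 : forall z, P z `<< PT.
Hypothesis hd2 : PT `<< Q.
Hypothesis int1 : (PZ \x PZ)%E.-integrable [set: Z * Z]
            (fun zu => risk L zu.2 (P zu.1)).
Hypothesis int2 : PZ.-integrable [set: Z] (fun z => risk L z (P z)).

Lemma L0 z th : 0 <= L z th.
Proof.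
rewrite /emp_risk; apply: mulr_ge0; first by rewrite invr_ge0 ler0n.
by apply: sumr_ge0 => i _; exact: ell_ge0.
Qed.

Lemma mL : measurable_fun [set: Z * M] (fun p => L p.1 p.2).
Proof. exact: emp_risk_measurable. Qed.

Lemma mg : measurable_fun [set: Z * M] (fun p => g p.1 p.2).
Proof.
rewrite /gibbs_density.
apply: (measurableT_comp (phi_measurable f f_der f_sconv)).
apply: measurable_funM => //.
apply: measurable_funN => //.
apply: measurable_funD => //; last exact: mL.
exact: measurableT_comp mbeta measurable_fst.
Qed.

Lemma g0 z th : 0 <= g z th.
Proof. exact: phi_ge0. Qed.

Lemma hPm A : measurable A -> measurable_fun [set: Z] (fun z => P z A).
Proof.
move=> mA.
pose k := fun p : Z * M => ((g p.1 p.2) * \1_A p.2)%:E.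
have -> : (fun z => P z A) = fubini_F Q k.
  apply/funext => z; rewrite P_dens // integral_mkcond /fubini_F.
  apply: eq_integral => th _; rewrite /k /patch indicE.
  by case: ifP => _; rewrite ?mulr1 ?mulr0.
apply: measurable_fun_fubini_tonelli_F.
  apply/measurable_EFinP; apply: measurable_funM; first exact: mg.
  apply: measurableT_comp measurable_snd.
  exact: measurable_indic.
by move=> p; rewrite /k lee_fin mulr_ge0 // ?g0.
Qed.

Lemma mgz z : measurable_fun [set: M] (g z).
Proof. exact: (measurable_fun_pair2 z mg). Qed.

Lemma mLz z : measurable_fun [set: M] (L z).
Proof. exact: (measurable_fun_pair2 z mL). Qed.

Lemma fdot_int (mu : probability M R) z : mu `<< Q ->
  (\int[mu]_th (fdot f (g z th))%:E =
   (- beta z / lam)%:E - (lam^-1)%:E * risk L z mu)%E.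
Proof.
move=> muQ.
have E : ae_eq mu setT (fun th => (fdot f (g z th))%:E)
    (fun th => ((- beta z / lam) - lam^-1 * L z th)%:E).
  apply: null_dominates_ae_eq muQ _ => //.
  apply: filterS (b_pos z) => th hth _; congr EFin.
  rewrite (@phi_pos _ f _ hth); rewrite /=; ring.
have m1 : measurable_fun [set: M] (fun th => (fdot f (g z th))%:E).
  apply/measurable_EFinP.
  have -> : (fun th => fdot f (g z th)) =
      (fun th => if 0 < g z th then - (beta z + L z th) / lam else fdot f 0).
    apply/funext => th; case: ifPn => hth.
      by rewrite (@phi_pos _ f _ hth).
    have -> : g z th = 0 by apply/eqP; rewrite eq_le g0 andbT leNgt.
    by [].
  apply: measurable_fun_ifT.
  - by apply: measurable_fun_ltr => //; exact: mgz.
  - apply: measurable_funM => //; apply: measurable_funN => //.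
    by apply: measurable_funD => //; exact: mLz.
  - exact: measurable_cst.
have m2 : measurable_fun [set: M] (fun th => ((- beta z / lam) - lam^-1 * L z th)%:E).
  apply/measurable_EFinP; apply: measurable_funB => //.
  by apply: measurable_funM => //; exact: mLz.
rewrite (ae_eq_integral _ _ measurableT m1 m2 E).
rewrite cst_minus //; last by move=> th; rewrite mulr_ge0 ?invr_ge0 ?L0 // ltW.
  under eq_integral do rewrite EFinM.
  rewrite ge0_integralZl_EFin ?invr_ge0 ?(ltW lam_gt0) //.
  by move=> th _; rewrite lee_fin L0.
all: try (by apply/measurable_EFinP; exact: mLz).
all: by apply: measurable_funM => //; exact: mLz.
Qed.

Lemma main_eq : gen_error L (fun z => P z) PZ =
  (lam%:E * \int[PZ]_z
     (\int[P z]_th (fdot f (g z th))%:E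
      - \int[PT]_th (fdot f (g z th))%:E))%E.
Proof.
pose A z := risk L z (P z).
pose B z := risk L z PT.
pose C (zu : Z * Z) := risk L zu.2 (P zu.1).
have A0 z : (0 <= A z)%E by apply: integral_ge0 => th _; rewrite lee_fin L0.
have B0 z : (0 <= B z)%E by apply: integral_ge0 => th _; rewrite lee_fin L0.
have C0 zu : (0 <= C zu)%E by apply: integral_ge0 => th _; rewrite lee_fin L0.
have mA : measurable_fun setT A := measurable_int _ int2.
have mC : measurable_fun setT C := measurable_int _ int1.
have mLE : measurable_fun [set: Z * M] (fun p => (L p.1 p.2)%:E).
  by apply/measurable_EFinP; exact: mL.
have mB : measurable_fun setT B.
  have H := measurable_fun_fubini_tonelli_F (m2 := PT) _ mLE.
  by apply: H => p; rewrite lee_fin L0.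
have BE u : B u = (\int[PZ]_z C (z, u))%E.
  rewrite /B /risk (@mix_integral _ _ _ _ _ PZ P PT hPm PT_def) //.
  - by apply/measurable_EFinP; exact: mLz.
  - by move=> th; rewrite lee_fin L0.
have intB : (\int[PZ]_u B u = \int[PZ \x PZ]_zu C zu)%E.
  rewrite (fubini_tonelli2 C mC C0); apply: eq_integral => u _.
  by rewrite BE.
have iB : PZ.-integrable setT B.
  apply/integrableP; split => //.
  under eq_integral do rewrite gee0_abs //.
  rewrite intB; move/integrableP: int1 => [_].
  have E : (\int[PZ \x PZ]_x `|risk L x.2 (P x.1)| = \int[PZ \x PZ]_zu C zu)%E.
    by apply: eq_integral => x _; exact: gee0_abs (C0 x).
  by rewrite E.
have iAfst : (PZ \x PZ)%E.-integrable setT (fun zu : Z * Z => A zu.1).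
  apply/integrableP; split; first exact: measurableT_comp mA measurable_fst.
  under eq_integral do rewrite gee0_abs //.
  rewrite (fubini_tonelli1 (fun zu : Z * Z => A zu.1)) //; last first.
    exact: measurableT_comp mA measurable_fst.
  rewrite /fubini_F /=; under eq_integral do rewrite int_cst_prob.
  move/integrableP: int2 => [_].
  have E : (\int[PZ]_x `|risk L x (P x)| = \int[PZ]_z A z)%E.
    by apply: eq_integral => x _; exact: gee0_abs (A0 x).
  by rewrite E.
have iF : (PZ \x PZ)%E.-integrable setT (fun zu : Z * Z => C zu - A zu.1)%E.
  exact: (integrableB measurableT int1 iAfst).
have LHS : gen_error L (fun z => P z) PZ = (\int[PZ]_u B u - \int[PZ]_z A z)%E.
  rewrite /gen_error.
  have := integral12_prod_meas1 iF; rewrite /fubini_F /= => ->.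
  rewrite (integralB measurableT int1 iAfst).
  congr (_ - _)%E; first by rewrite intB.
  rewrite (fubini_tonelli1 (fun zu : Z * Z => A zu.1)) //; last first.
    exact: measurableT_comp mA measurable_fst.
  by rewrite /fubini_F /=; under eq_integral do rewrite int_cst_prob.
rewrite LHS.
transitivity (lam%:E * \int[PZ]_z
   (((- beta z / lam)%:E - (lam^-1)%:E * risk L z (P z)) -
    ((- beta z / lam)%:E - (lam^-1)%:E * risk L z PT)))%E; last first.
  congr (_ * _)%E; apply: eq_integral => z _; congr (_ - _)%E.
    exact/esym/(fdot_int (P z) z (null_dominates_trans (hd1 z) hd2)).
  exact/esym/(fdot_int PT z hd2).
pose c z := - beta z / lam.
pose li := (lam^-1)%:E.
have mc : measurable_fun [set: Z] (fun z => (c z)%:E).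
  apply/measurable_EFinP; apply: measurable_funM => //; exact: measurable_funN.
have m1 : measurable_fun [set: Z]
    (fun z => ((c z)%:E - li * A z) - ((c z)%:E - li * B z))%E.
  apply: emeasurable_funB; apply: emeasurable_funB => //; exact: measurable_funeM.
have m2 : measurable_fun [set: Z] (fun z => li * (B z - A z))%E.
  by apply: measurable_funeM; exact: emeasurable_funB.
have E : ae_eq PZ setT
    (fun z => ((c z)%:E - li * A z) - ((c z)%:E - li * B z))%E
    (fun z => li * (B z - A z))%E.
  have fA := integrable_ae measurableT int2.
  have fB := integrable_ae measurableT iB.
  apply: filterS2 fA fB => z hA hB _.
  have := hA Logic.I; have := hB Logic.I.
  rewrite /A /B /li; move: (risk L z (P z)) (risk L z PT) => a b.
  case: b => [b||] // _; case: a => [a||] // _.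
  rewrite -(EFinB b a) -(EFinM _ (b - a)) -(EFinM _ a) -(EFinM _ b) -!EFinB; congr EFin; ring.
rewrite (ae_eq_integral _ _ measurableT m1 m2 E).
rewrite integralZl //; last exact: (integrableB measurableT iB int2).
rewrite (integralB measurableT iB int2).
rewrite /li muleA -EFinM mulfV ?mul1e //.
by rewrite gt_eqF.
Qed.

End main.

Theorem theorem6 (R : realType)
  (* parameter space M with measurable structure *)
  (dM : measure_display) (M : measurableType dM)
  (* data spaces; datasets are n-tuples in (X * Y) *)
  (dX dY : measure_display) (X : measurableType dX) (Y : measurableType dY)
  (n : nat)
  (h : M -> X -> Y) (ell : Y -> Y -> R)
  (ell_ge0 : forall y y', 0 <= ell y y')
  (ell_diag : forall y, ell y y = 0)
  (mh : measurable_fun [set: M * X] (fun p => h p.1 p.2))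
  (mell : measurable_fun [set: Y * Y] (fun p => ell p.1 p.2))
  (Q : probability M R) (lam : R) (lam_gt0 : 0 < lam)
  (f : R -> R)
  (f1 : f 1 = 0)
  (* (a) f strictly convex on [0,oo) and differentiable on (0,oo) *)
  (f_sconv : strictly_convex_on f `[0, +oo[)
  (f_der : forall x, 0 < x -> derivable f x 1)
  (PZ : probability (n.-tuple (X * Y)) R)
  (beta : n.-tuple (X * Y) -> R)
  (mbeta : measurable_fun [set: n.-tuple (X * Y)] beta)
  (* (b) for every dataset z *)
  (b_pos : forall z, {ae Q, forall th,
      0 < gibbs_density f lam beta (emp_risk h ell) z th})
  (b_norm : forall z,
      (\int[Q]_th (gibbs_density f lam beta (emp_risk h ell) z th)%:E = 1)%E)
  (* the algorithm P^{(Q,lam)}_{Theta|Z=z}, given by its density w.r.t. Q *)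
  (P : n.-tuple (X * Y) -> probability M R)
  (P_dens : forall z A, measurable A ->
      P z A = (\int[Q]_(th in A) (gibbs_density f lam beta (emp_risk h ell) z th)%:E)%E)
  (* its marginal P^{(Q,lam)}_Theta *)
  (PT : probability M R)
  (PT_def : forall A, measurable A -> PT A = (\int[PZ]_z P z A)%E)
  (* (d) *)
  (hd1 : forall z, P z `<< PT)
  (hd2 : PT `<< Q)
  (* (e) *)
  (he : Q `<< PT)
  (* well-definedness (finiteness) of the generalization error *)
  (int1 : (PZ \x PZ)%E.-integrable [set: n.-tuple (X * Y) * n.-tuple (X * Y)]
            (fun zu => risk (emp_risk h ell) zu.2 (P zu.1)))
  (int2 : PZ.-integrable [set: n.-tuple (X * Y)]
            (fun z => risk (emp_risk h ell) z (P z))) :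
  gen_error (emp_risk h ell) (fun z => P z) PZ =
  (lam%:E * \int[PZ]_z
     (\int[P z]_th (fdot f (gibbs_density f lam beta (emp_risk h ell) z th))%:E
      - \int[PT]_th (fdot f (gibbs_density f lam beta (emp_risk h ell) z th))%:E))%E.
Proof. by apply: main_eq. Qed.
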